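(* Let $0<\delta<1$. Let $\mathcal I=(G=(V,E),\beta,\gamma,\lambda)$ be an anti-ferromagnetic two-spin system with maximum degree $\Delta\ge3$ and Gibbs distribution $\mu$, satisfying: either (a) $\gamma\le1$ and $(\beta,\gamma,\lambda)$ is $d$-unique with gap $\delta$ for every $1\le d\le\Delta-1$, or (b) $\gamma>1$, $(\beta,\gamma,\lambda)$ is $(\Delta-1)$-unique with gap $\delta$, and $G$ is $\Delta$-regular. Let $\chi=+1$ if $\lambda\le(\gamma/\beta)^{\Delta/2}$ and $\chi=-1$ otherwise, and $\pi=\mathrm{flip}(\mu,\chi)$. Then $\pi$ is completely $\exp(12^5)$-marginally stable.
   Context: Two-spin Gibbs distribution $\mu(\sigma)\propto\beta^{m_+(\sigma)}\gamma^{m_-(\sigma)}\lambda^{n_+(\sigma)}$ on $\{-1,+1\}^V$ ($m_\pm$ = edges with both endpoints $\pm1$, $n_+$ = number of $+1$ vertices). Anti-ferromagnetic: $0\le\beta\le\gamma$, $\gamma>0$, $\lambda>0$, $\beta\gamma<1$. $d$-unique with gap $\delta$: $\frac{d(1-\beta\gamma)\hat x_d}{(\beta\hat x_d+1)(\hat x_d+\gamma)}\le1-\delta$, $\hat x_d>0$ the unique fixed point of $F_d(x)=\lambda\left(\frac{\beta x+1}{x+\gamma}\right)^d$. Convention $(\gamma/\beta)^{\Delta/2}=+\infty$ if $\beta=0$. $\mathrm{flip}(\mu,\chi)(\sigma)=\mu(\chi\sigma)$. For a distribution $\nu$ on $\{-1,+1\}^V$: $\Omega(\nu)$ support, $\nu_\Lambda$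 marginal, $\nu^\sigma$ conditional given $\sigma\in\Omega(\nu_\Lambda)$. $\nu$ is $\zeta$-marginally stable if for every $i\in V$, $S\subseteq\Lambda\subseteq V\setminus\{i\}$, $\sigma\in\Omega(\nu_\Lambda)$: $R_i^\sigma\le\zeta$ and $R_i^\sigma\le\zeta R_i^{\sigma_S}$ with $R_i^\sigma=\nu_i^\sigma(+1)/\nu_i^\sigma(-1)$. $\nu$ is completely $\zeta$-marginally stable if $(\boldsymbol\lambda*\nu)$ is $\zeta$-marginally stable for all $\boldsymbol\lambda\in(0,1]^V$, where $(\boldsymbol\lambda*\nu)(\sigma)\propto\nu(\sigma)\prod_{i:\sigma_i=+1}\lambda_i$. *)

(* Defs.v *)
(* Spins: true = +1, false = -1. *)
From HB Require Import structures.
From mathcomp Require Import all_boot all_order all_algebra.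
From mathcomp Require Import reals sequences exp.
Set Implicit Arguments. Unset Strict Implicit. Unset Printing Implicit Defensive.
Import Order.TTheory GRing.Theory Num.Theory.
Local Open Scope ring_scope.

Section Defs.
Variable R : realType.
Variable V : finType.

Definition config := {ffun V -> bool}.

Definition simple_graph (e : rel V) : Prop := symmetric e /\ irreflexive e.

Definition deg (e : rel V) (v : V) : nat := #|[set u | e v u]|.
Definition maxdeg (e : rel V) : nat := \max_(v : V) deg e v.
Definition regular (e : rel V) (D : nat) : Prop := forall v, deg e v = D.

Definition edges (e : rel V) : {set {set V}} :=
  [set [set p.1; p.2] | p in [set p : V * V | e p.1 p.2]].

Definition m_spin (e : rel V) (s : config) (b : bool) : nat :=
  #|[set E in edges e | [forall x in E, s x == b]]|.
Definition n_plus (s : config) : nat := #|[set v | s v]|.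

Definition gibbs_weight (e : rel V) (beta gamma lambda : R) (s : config) : R :=
  beta ^+ m_spin e s true * gamma ^+ m_spin e s false * lambda ^+ n_plus s.
Definition gibbs (e : rel V) (beta gamma lambda : R) (s : config) : R :=
  gibbs_weight e beta gamma lambda s / \sum_(t : config) gibbs_weight e beta gamma lambda t.

Definition antiferro (beta gamma lambda : R) : Prop :=
  0 <= beta /\ beta <= gamma /\ 0 < gamma /\ 0 < lambda /\ beta * gamma < 1.

Definition Fd (beta gamma lambda : R) (d : nat) (x : R) : R :=
  lambda * ((beta * x + 1) / (x + gamma)) ^+ d.

Definition d_unique (beta gamma lambda : R) (d : nat) (delta : R) : Prop :=
  (exists x, 0 < x /\ Fd beta gamma lambda d x = x) /\
  forall x, 0 < x -> Fd beta gamma lambda d x = x ->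
    d%:R * (1 - beta * gamma) * x / ((beta * x + 1) * (x + gamma)) <= 1 - delta.

(** chi = +1 (true) iff lambda <= (gamma/beta)^(Delta/2), with value +oo if beta = 0 *)
Definition chi_of (beta gamma lambda : R) (D : nat) : bool :=
  if beta == 0 then true else lambda <= powR (gamma / beta) (D%:R / 2).

Definition flip (mu : config -> R) (chi : bool) (s : config) : R :=
  mu (if chi then s else [ffun x => ~~ s x]).

(** marginals / conditionals of a distribution nu on {-1,+1}^V.
    A partial configuration on L is represented by (L, s) with s : config. *)
Definition agree (L : {set V}) (s t : config) : bool := [forall x in L, s x == t x].
Definition marg (nu : config -> R) (L : {set V}) (s : config) : R :=
  \sum_(t | agree L s t) nu t.
Definition cond_marg (nu : config -> R) (L : {set V}) (s : config) (i : V) (b : bool) : R :=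
  (\sum_(t | agree L s t && (t i == b)) nu t) / marg nu L s.
Definition Rratio (nu : config -> R) (L : {set V}) (s : config) (i : V) : R :=
  cond_marg nu L s i true / cond_marg nu L s i false.

(** zeta-marginal stability. R_i^sigma <= zeta (< +oo) forces nu_i^sigma(-1) > 0,
    which we state explicitly so that the ratios are genuine finite reals. *)
Definition marginally_stable (nu : config -> R) (zeta : R) : Prop :=
  forall (i : V) (S L : {set V}) (s : config),
    S \subset L -> i \notin L -> 0 < marg nu L s ->
    [/\ 0 < cond_marg nu L s i false,
        Rratio nu L s i <= zeta &
        Rratio nu L s i <= zeta * Rratio nu S s i].

Definition tilt (lam : V -> R) (nu : config -> R) (s : config) : R :=
  (nu s * \prod_(i | s i) lam i) / \sum_(t : config) (nu t * \prod_(i | t i) lam i).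

Definition completely_marginally_stable (nu : config -> R) (zeta : R) : Prop :=
  forall lam : V -> R, (forall i, 0 < lam i <= 1) -> marginally_stable (tilt lam nu) zeta.

End Defs.

(* Main.v *)
Require Import Defs.
From HB Require Import structures.
From mathcomp Require Import all_boot all_order all_algebra.
From mathcomp Require Import reals sequences exp.
From mathcomp Require Import ring lra.
Import Order.TTheory GRing.Theory Num.Theory.
Local Open Scope ring_scope.
Set Implicit Arguments. Unset Strict Implicit. Unset Printing Implicit Defensive.


Section Tog.
Variable V : finType.
Definition tog (j : V) (t : config V) : config V :=
  [ffun x => if x == j then ~~ t x else t x].
Lemma togK j : involutive (tog j).
Proof. by move=> t; apply/ffunP=> x; rewrite !ffunE; case: eqP=> // _; rewrite negbK. Qed.
Lemma tog_inj j : injective (tog j).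
Proof. exact: inv_inj (togK j). Qed.
Lemma tog_j j t : tog j t j = ~~ t j.
Proof. by rewrite ffunE eqxx. Qed.
Lemma tog_ne j t x : x != j -> tog j t x = t x.
Proof. by rewrite ffunE => /negbTE ->. Qed.
Lemma agree_tog (L : {set V}) s t j : j \notin L -> agree L s (tog j t) = agree L s t.
Proof.
move=> jL; apply/forall_inP/forall_inP => H x xL; have := H x xL;
  rewrite tog_ne //; apply: contraNneq jL => <-; done.
Qed.
Lemma sum_tog (R : realType) (P : pred (config V)) j (F : config V -> R) :
  (forall t, P (tog j t) = P t) ->
  \sum_(t | P t && t j) F t = \sum_(t | P t && ~~ t j) F (tog j t).
Proof.
move=> HP; rewrite (reindex_inj (tog_inj (j:=j))); apply: eq_bigl => t.
by rewrite HP tog_j.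
Qed.
End Tog.

Section Abstract.
Variables (R : realType) (V : finType) (e : rel V).
Hypothesis eirr : irreflexive e.
Variables (nu : config V -> R) (K : V -> R) (c M : R).
Definition G (j : V) (t : config V) : R := \prod_(k | e j k) (if t k then c else 1).
Hypothesis nu_ge0 : forall t : config V, 0 <= nu t.
Hypothesis hloc : forall j (t : config V), ~~ t j -> nu (tog j t) = K j * G j t * nu t.
Hypothesis c01 : 0 <= c <= 1.
Hypothesis KM : forall j, 0 <= K j <= M.

Lemma ite01 (b : bool) : 0 <= (if b then c else 1) <= 1.
Proof. by case: b => //; rewrite ler01 lexx. Qed.

Lemma G01 j t : 0 <= G j t <= 1.
Proof.
apply/andP; split; first by apply: prodr_ge0 => k _; case/andP: (ite01 (t k)).
by apply: prodr_ile1 => k _; apply: ite01.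
Qed.

Definition qq := (1 + c * M) / (1 + M).

Hypothesis M0 : 0 <= M.

Lemma qq_ge0 : 0 <= qq.
Proof. rewrite /qq divr_ge0 //; case/andP: c01 => c0 _; [apply: addr_ge0 => //; exact: mulr_ge0|exact: addr_ge0]. Qed.
Lemma qq_le1 : qq <= 1.
Proof.
rewrite /qq ler_pdivrMr ?mul1r; last by apply: ltr_wpDr.
by rewrite lerD2l; case/andP: c01 => _ c1; rewrite -{2}(mul1r M) ler_wpM2r.
Qed.

Lemma step_ineq rho h : 0 <= rho <= M -> 0 <= h -> qq * ((1 + rho) * h) <= (1 + c * rho) * h.
Proof.
case/andP=> r0 rM h0; rewrite mulrA ler_wpM2r // /qq mulrAC ler_pdivrMr; last by apply: ltr_wpDr.
case/andP: c01 => c0 c1.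
have : 0 <= (M - rho) * (1 - c) by apply: mulr_ge0; rewrite subr_ge0.
move=> H; rewrite -subr_ge0; apply: le_trans H _; rewrite le_eqVlt; apply/orP; left; apply/eqP; ring.
Qed.

Lemma chain (r : seq V) (P : pred (config V)) :
  uniq r -> (forall j t, j \in r -> P (tog j t) = P t) ->
  qq ^+ size r * \sum_(t | P t) nu t <= \sum_(t | P t) nu t * \prod_(k <- r) (if t k then c else 1).
Proof.
elim: r => [|j r IH] /=.
  by move=> _ _; rewrite expr0 mul1r; under [X in _ <= X]eq_bigr do rewrite big_nil mulr1.
case/andP=> jr ur HP.
have HP' : forall j0 t, j0 \in r -> P (tog j0 t) = P t.
  by move=> j0 t jr0; apply: HP; rewrite inE jr0 orbT.
set H := fun t => nu t * \prod_(k <- r) (if t k then c else 1).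
have Hge0 : forall t, 0 <= H t.
  move=> t; apply: mulr_ge0 => //; apply: prodr_ge0 => k _; by case/andP: (ite01 (t k)).
have Hprod : forall t, \prod_(k <- r) (if tog j t k then c else 1) = \prod_(k <- r) (if t k then c else 1).
  move=> t; rewrite [LHS]big_seq [RHS]big_seq.
  apply: eq_bigr => k kr; rewrite tog_ne //.
  by apply: contraNneq jr => <-.
have Htog : forall t, H (tog j t) = nu (tog j t) * \prod_(k <- r) (if t k then c else 1).
  by move=> t; rewrite /H Hprod.
have HPj : forall t, P (tog j t) = P t by move=> t; apply: HP; rewrite inE eqxx.
have E1 : \sum_(t | P t) nu t * \prod_(k <- j :: r) (if t k then c else 1)
   = \sum_(t | P t && ~~ t j) (1 + c * (K j * G j t)) * H t.
  under eq_bigr do rewrite big_cons mulrCA.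
  
  rewrite (bigID (fun t : config V => t j)) /= sum_tog //.
  rewrite -big_split /=; apply: eq_bigr => t /andP[_ tj].
  rewrite tog_j (negbTE tj) Hprod hloc // /H /=; ring.
have E2 : \sum_(t | P t) H t = \sum_(t | P t && ~~ t j) (1 + K j * G j t) * H t.
  rewrite (bigID (fun t : config V => t j)) /= sum_tog //.
  rewrite -big_split /=; apply: eq_bigr => t /andP[_ tj].
  rewrite Htog hloc // /H; ring.
rewrite E1 exprS -mulrA.
apply: le_trans (ler_wpM2l qq_ge0 (IH ur HP')) _.
rewrite -/H E2 mulr_sumr; apply: ler_sum => t _.
apply: step_ineq => //.
case/andP: (KM j) => k0 kM; case/andP: (G01 j t) => g0 g1.
rewrite mulr_ge0 //=; apply: le_trans kM; rewrite -{2}(mulr1 (K j)); exact: ler_wpM2l.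
Qed.

Variable D : nat.
Hypothesis degD : forall j, (#|[set k | e j k]| <= D)%N.

Definition Asum (L : {set V}) (s : config V) (i : V) (b : bool) :=
  \sum_(t | agree L s t && (t i == b)) nu t.

Lemma Aplus (L : {set V}) (s : config V) i : i \notin L ->
  Asum L s i true = \sum_(t | agree L s t && ~~ t i) K i * G i t * nu t.
Proof.
move=> iL; rewrite /Asum.
under eq_bigl do rewrite eqb_id.
rewrite sum_tog; last by move=> t; rewrite agree_tog.
by apply: eq_bigr => t /andP[_ ti]; rewrite hloc.
Qed.

Lemma Aminus (L : {set V}) (s : config V) i : Asum L s i false = \sum_(t | agree L s t && ~~ t i) nu t.
Proof. by rewrite /Asum; under eq_bigl do rewrite eqbF_neg. Qed.

Lemma Asum_ge0 (L : {set V}) (s : config V) i b : 0 <= Asum L s i b.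
Proof. by apply: sumr_ge0. Qed.

Lemma marg_split (L : {set V}) (s : config V) i : marg nu L s = Asum L s i true + Asum L s i false.
Proof.
rewrite /marg /Asum (bigID (fun t : config V => t i)) /=; congr (_ + _);
  apply: eq_bigl => t; by rewrite ?eqb_id ?eqbF_neg.
Qed.

Lemma Rratio_eq (L : {set V}) (s : config V) i : 0 < marg nu L s ->
  Rratio nu L s i = Asum L s i true / Asum L s i false.
Proof.
move=> m0; rewrite /Rratio /cond_marg -!/(Asum _ _ _ _).
by rewrite invf_div mulrA divfK // gt_eqF.
Qed.

Lemma agree_sub (S L : {set V}) (s t : config V) : S \subset L -> agree L s t -> agree S s t.
Proof. by move=> SL /forall_inP H; apply/forall_inP => x xS; apply: H; apply: (subsetP SL). Qed.

Lemma G_split i (S : {set V}) (s t : config V) : agree S s t ->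
  G i t = (\prod_(k | e i k && (k \in S)) (if s k then c else 1)) *
          \prod_(k | e i k && (k \notin S)) (if t k then c else 1).
Proof.
move=> /forall_inP H; rewrite /G (bigID (fun k => k \in S)) /=; congr (_ * _).
by apply: eq_bigr => k /andP[_ kS]; rewrite (eqP (H k kS)).
Qed.

Lemma abstract_stab i (S L : {set V}) (s : config V) : S \subset L -> i \notin L -> 0 < marg nu L s ->
  [/\ 0 < cond_marg nu L s i false, Rratio nu L s i <= M &
      qq ^+ D * Rratio nu L s i <= Rratio nu S s i].
Proof.
move=> SL iL m0.
have iS : i \notin S by apply: contra iL; apply: (subsetP SL).
case/andP: (KM i) => K0 KiM.
set CS := \prod_(k | e i k && (k \in S)) (if s k then c else 1).
set H' := fun t : config V => \prod_(k | e i k && (k \notin S)) (if t k then c else 1).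
have CS0 : 0 <= CS by apply: prodr_ge0 => k _; case/andP: (ite01 (s k)).
have H'01 : forall t, 0 <= H' t <= 1.
  move=> t; apply/andP; split; first by apply: prodr_ge0 => k _; case/andP: (ite01 (t k)).
  by apply: prodr_ile1 => k _; apply: ite01.
have AP : forall L' : {set V}, S \subset L' -> i \notin L' ->
    Asum L' s i true = K i * CS * \sum_(t | agree L' s t && ~~ t i) nu t * H' t.
  move=> L' SL' iL'; rewrite Aplus // mulr_sumr; apply: eq_bigr => t /andP[ag _].
  by rewrite (G_split i (agree_sub SL' ag)) -/CS /H' /=; ring.
have ALle : Asum L s i true <= K i * CS * Asum L s i false.
  rewrite AP // Aminus; apply: ler_wpM2l; first exact: mulr_ge0.
  apply: ler_sum => t _; case/andP: (H'01 t) => _ h1.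
  by rewrite -{2}(mulr1 (nu t)); apply: ler_wpM2l.
have KCS1 : K i * CS <= K i.
  rewrite -{2}(mulr1 (K i)); apply: ler_wpM2l => //.
  by apply: prodr_ile1 => k _; apply: ite01.
have ALm0 : 0 < Asum L s i false.
  rewrite lt_neqAle Asum_ge0 andbT; apply/eqP => H0.
  move: m0; rewrite (marg_split _ _ i) -H0 addr0 => m0'.
  rewrite -H0 mulr0 in ALle.
  by move: (lt_le_trans m0' ALle); rewrite ltxx.
have ASm0 : 0 < Asum S s i false.
  apply: lt_le_trans ALm0 _; rewrite !Aminus.
  rewrite [X in _ <= X](bigID (fun t : config V => agree L s t)) /= -[X in X <= _]addr0.
  apply: lerD; last by apply: sumr_ge0.
  rewrite le_eqVlt; apply/orP; left; apply/eqP; apply: eq_bigl => t.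
  case ag: (agree L s t); rewrite ?andbF ?andbT //=.
  by rewrite (agree_sub SL ag).
have mS0 : 0 < marg nu S s by rewrite (marg_split _ _ i); apply: ltr_wpDl => //; exact: Asum_ge0.
have RL : Rratio nu L s i <= K i * CS.
  by rewrite Rratio_eq // ler_pdivrMr // mulrC.
split.
- by rewrite /cond_marg -/(Asum _ _ _ _) divr_gt0.
- by apply: le_trans RL _; apply: le_trans KCS1 KiM.
set J := [set k | e i k && (k \notin S)].
have HJ : forall t, H' t = \prod_(k <- enum J) (if t k then c else 1).
  by move=> t; rewrite big_enum; apply: eq_bigl => k; rewrite inE.
have Jcard : (#|J| <= D)%N.
  apply: leq_trans (degD i); apply: subset_leq_card; apply/subsetP => k.
  by rewrite !inE => /andP[].
have ch := chain (enum_uniq (mem J)) (P := fun t => agree S s t && ~~ t i).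
have ch' : qq ^+ #|J| * Asum S s i false <= \sum_(t | agree S s t && ~~ t i) nu t * H' t.
  rewrite Aminus cardE.
  have -> : \sum_(t | agree S s t && ~~ t i) nu t * H' t =
    \sum_(t | agree S s t && ~~ t i) nu t * \prod_(k <- enum J) (if t k then c else 1).
    by apply: eq_bigr => t _; rewrite HJ.
  apply: ch.
  move=> j t; rewrite mem_enum inE => /andP[eij jS].
  rewrite agree_tog // tog_ne //; by apply/eqP => ji; move: eij; rewrite ji eirr.
have qD : qq ^+ D <= qq ^+ #|J| by apply: (ler_wiXn2l qq_ge0 qq_le1).
rewrite (Rratio_eq (L:=S)) // ler_pdivlMr // AP //.
apply: le_trans (_ : K i * CS * (qq ^+ #|J| * Asum S s i false) <= _); last first.
  by apply: ler_wpM2l ch'; exact: mulr_ge0.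
rewrite mulrA; apply: ler_wpM2r; first exact: Asum_ge0.
rewrite mulrC; apply: ler_pM => //.
  by rewrite Rratio_eq // divr_ge0 // Asum_ge0.
exact: exprn_ge0 qq_ge0.
Qed.
End Abstract.


Section Analytic.
Variable R : realType.

Definition gg (c : R) (d : nat) (w : R) := w * ((1 + w) / (1 + c * w)) ^+ d.

Lemma expR5 : expR (5 : R) <= 1024.
Proof.
have h : expR (1/2 : R) <= 2.
  have := expR_ge1Dx (- (1/2) : R); rewrite expRN => H.
  have e0 : 0 < expR (1/2 : R) by apply: expR_gt0.
  rewrite -(ler_pM2r (_ : 0 < 1/2)) ?divr_gt0 //.
  apply: le_trans (_ : 1 <= _); last by lra.
  have : (1 - 1/2 : R) * expR (1/2) <= (expR (1/2))^-1 * expR (1/2).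
    by rewrite ler_wpM2r // ?ltW // ; lra.
  rewrite mulVf ?gt_eqF //; lra.
have -> : (5 : R) = 10%:R * (1/2) by rewrite -[10%:R]/(10 : R); lra.
rewrite expRM_natl.
have -> : (1024 : R) = 2 ^+ 10 by rewrite -[1024]/(1024%:R) -natrX.
by apply: lerXn2r => //; rewrite ?nnegrE ?ltW ?expR_gt0 //.
Qed.

Lemma key (c w : R) (d : nat) : 0 <= c <= 1 -> 0 < w -> (2 <= d)%N ->
  c * w ^+ 2 <= 1 -> d%:R * (1 - c) * w <= (1 + c * w) * (1 + w) ->
  gg c d w <= 4 * expR 5 /\ d.+1%:R * (1 - c) * gg c d w <= 15 * expR 5.
Proof.
move=> /andP[c0 c1] w0 d2 cw2 uq.
have d2R : (2 : R) <= d%:R by rewrite -[2]/(2%:R) ler_nat.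
have cw1 : c * w <= 1.
  case: (lerP w 1) => hw; first by nra.
  have : c * w <= c * w * w.
    by apply: ler_peMr; [apply: mulr_ge0 => //; exact: ltW | exact: ltW].
  by move=> h; apply: le_trans h _; rewrite -mulrA -expr2.
have cw0 : 0 <= c * w by apply: mulr_ge0 => //; exact: ltW.
have w4 : w <= 4.
  rewrite leNgt; apply/negP => hw.
  have h1 : c * w * 4 <= 1 by apply: le_trans cw2; rewrite expr2 mulrA ler_wpM2l //; exact: ltW.
  have h2 : 2 * (1 - c) * w <= (1 + c * w) * (1 + w).
    apply: le_trans uq; rewrite -!mulrA ler_wpM2r //; apply: mulr_ge0; lra.
  rewrite expr2 in cw2. nra.
have den : 0 < 1 + c * w by lra.
set y := (1 - c) * w / (1 + c * w).
have y0 : 0 <= y by rewrite /y divr_ge0 // ?mulr_ge0 //; lra.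
have hy : (1 + w) / (1 + c * w) = 1 + y.
  by rewrite /y; field; rewrite gt_eqF.
have dy : d%:R * y <= 1 + w.
  rewrite /y mulrA ler_pdivrMr //; lra.
have pw : ((1 + w) / (1 + c * w)) ^+ d <= expR (d%:R * y).
  rewrite hy expRM_natl; apply: lerXn2r; rewrite ?nnegrE ?expR_ge1Dx //; last exact: ltW (expR_gt0 _).
  lra.
have e5 : expR (d%:R * y) <= expR 5 by rewrite ler_expR; lra.
have pw' : ((1 + w) / (1 + c * w)) ^+ d <= expR 5 := le_trans pw e5.
have pw0 : 0 <= ((1 + w) / (1 + c * w)) ^+ d by apply: exprn_ge0; apply: divr_ge0; lra.
split.
  rewrite /gg; apply: ler_pM => //; exact: ltW.
rewrite /gg.
have d3 : d.+1%:R <= 3 / 2 * d%:R :> R by rewrite -natr1; lra.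
have X : d.+1%:R * (1 - c) * (w * ((1 + w) / (1 + c * w)) ^+ d) <=
         3 / 2 * (d%:R * (1 - c) * w) * ((1 + w) / (1 + c * w)) ^+ d.
  have -> : d.+1%:R * (1 - c) * (w * ((1 + w) / (1 + c * w)) ^+ d) =
            d.+1%:R * ((1 - c) * w * ((1 + w) / (1 + c * w)) ^+ d) by ring.
  have -> : 3 / 2 * (d%:R * (1 - c) * w) * ((1 + w) / (1 + c * w)) ^+ d =
            3 / 2 * d%:R * ((1 - c) * w * ((1 + w) / (1 + c * w)) ^+ d) by ring.
  apply: ler_wpM2r => //; apply: mulr_ge0 => //; apply: mulr_ge0; lra.
apply: le_trans X _.
have Y : d%:R * (1 - c) * w <= 10 by apply: le_trans uq _; nra.
have Y0 : 0 <= d%:R * (1 - c) * w by apply: mulr_ge0; [apply: mulr_ge0|]; lra.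
have : 3 / 2 * (d%:R * (1 - c) * w) <= 15 by lra.
move=> Z; apply: le_trans (_ : 15 * ((1 + w) / (1 + c * w)) ^+ d <= _).
  by apply: ler_wpM2r.
by apply: ler_wpM2l.
Qed.

Lemma ggsq_gen (c u : R) d : c ^+ d.+1 * gg c d u ^+ 2 =
  c * u ^+ 2 * (c * ((1 + u) / (1 + c * u)) ^+ 2) ^+ d.
Proof.
rewrite /gg; move: ((1 + u) / (1 + c * u)) => r.
by rewrite exprS !expr2 !exprMn; ring.
Qed.

Lemma gg_inv (c u : R) d : 0 < c -> 0 < u ->
  gg c d (c * u)^-1 = (c ^+ d.+1 * gg c d u)^-1.
Proof.
move=> c0 u0.
have cu0 : 0 < 1 + c * u by apply: addr_gt0 => //; exact: mulr_gt0.
have hr : (1 + (c * u)^-1) / (1 + c * (c * u)^-1) = (c * ((1 + u) / (1 + c * u)))^-1.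
  by field; rewrite !gt_eqF // addr_gt0.
have r0 : (1 + u) / (1 + c * u) != 0 by rewrite gt_eqF // divr_gt0 // addr_gt0.
rewrite /gg hr; move: ((1 + u) / (1 + c * u)) r0 => r r0.
rewrite exprVn exprMn exprS.
have rd : r ^+ d != 0 by rewrite expf_neq0.
have cd : c ^+ d != 0 by rewrite expf_neq0 // gt_eqF.
move: (r ^+ d) (c ^+ d) rd cd => A B A0 B0.
by field; rewrite A0 B0 !gt_eqF.
Qed.

Lemma uq_inv (c u : R) (d : nat) : 0 < c -> 0 < u ->
  d%:R * (1 - c) * u <= (1 + c * u) * (1 + u) ->
  d%:R * (1 - c) * (c * u)^-1 <= (1 + c * (c * u)^-1) * (1 + (c * u)^-1).
Proof.
move=> c0 u0 h; rewrite -subr_ge0.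
have -> : (1 + c * (c * u)^-1) * (1 + (c * u)^-1) - d%:R * (1 - c) * (c * u)^-1 =
   ((1 + c * u) * (1 + u) - d%:R * (1 - c) * u) / (c * u ^+ 2).
  by field; rewrite !gt_eqF.
by apply: divr_ge0; [rewrite subr_ge0 | apply: mulr_ge0; rewrite ?sqr_ge0 // ltW].
Qed.
End Analytic.


Section Count.
Variables (V : finType) (e : rel V).
Hypothesis esymm : symmetric e.
Hypothesis eirr : irreflexive e.

Lemma mspin_tog (s : config V) j :
  m_spin e (tog j s) (~~ s j) =
  (m_spin e s (~~ s j) + #|[set k | e j k && (s k == ~~ s j)]|)%N.
Proof.
set b := ~~ s j; set t := tog j s.
rewrite /m_spin.
set At := [set E in edges e | [forall x in E, t x == b]].
set As := [set E in edges e | [forall x in E, s x == b]].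
have tx : forall x, x != j -> t x = s x by move=> x; apply: tog_ne.
have sub : As \subset At.
  apply/subsetP => E; rewrite !inE => /andP[-> /forall_inP H] /=.
  apply/forall_inP => x xE; have := H x xE; case: (eqVneq x j) => [->|xj].
    by rewrite /b; case: (s j).
  by rewrite tx.
have diff : At :\: As = [set [set j; k] | k in [set k | e j k && (s k == b)]].
  apply/setP => E; rewrite !inE; apply/idP/idP.
  - case/andP=> nAs /andP[Ed /forall_inP Ht].
    move: nAs; rewrite Ed /= => /forall_inP nH.
    have [x0 x0E sx0] : exists2 x0, x0 \in E & s x0 != b.
      apply/exists_inP; rewrite -negb_forall_in; apply/negP => /forall_inP; exact: nH.
    have x0j : x0 = j.
      apply/eqP; apply: contraNT sx0 => x0j; rewrite -tx //; exact: Ht.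
    subst x0.
    case/imsetP: Ed => [[x y]]; rewrite inE /= => exy EE.
    move: x0E; rewrite EE !inE => /orP[] /eqP jE.
    + subst x; apply/imsetP; exists y => //; rewrite inE exy /=.
      have yj : y != j by apply/eqP => yj; move: exy; rewrite yj eirr.
      by rewrite -tx // Ht // EE !inE eqxx orbT.
    + subst y; apply/imsetP; exists x; last by rewrite setUC.
      have xj : x != j by apply/eqP => xj; move: exy; rewrite xj eirr.
      by rewrite inE esymm exy /= -tx // Ht // EE !inE eqxx.
  - case/imsetP => k; rewrite inE => /andP[ejk skb] ->.
    have kj : k != j by apply/eqP => kj; move: ejk; rewrite kj eirr.
    apply/andP; split; last (apply/andP; split).
    + rewrite negb_and; apply/orP; right.
      apply/negP => /forall_inP H; have := H j; rewrite !inE eqxx => /(_ isT).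
      by rewrite /b; case: (s j).
    + by apply/imsetP; exists (j, k); rewrite ?inE.
    + apply/forall_inP => x; rewrite !inE => /orP[] /eqP ->.
        by rewrite /t tog_j.
      by rewrite tx.
have -> : #|At| = (#|At :&: As| + #|At :\: As|)%N by rewrite cardsID.
rewrite (setIidPr sub) diff card_in_imset //.
move=> k1 k2; rewrite !inE => /andP[e1 _] /andP[e2 _] /setP H.
have := H k1; rewrite !inE eqxx orbT => /esym /orP[] /eqP // k1j.
by move: e1; rewrite k1j eirr.
Qed.

Lemma nplus_tog (s : config V) j : ~~ s j -> n_plus (tog j s) = (n_plus s).+1.
Proof.
move=> sj; rewrite /n_plus.
have -> : [set v | tog j s v] = j |: [set v | s v].
  apply/setP => v; rewrite !inE; case: (eqVneq v j) => [->|vj]; first by rewrite tog_j sj.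
  by rewrite tog_ne.
by rewrite cardsU1 inE sj.
Qed.

Lemma deg_split (s : config V) j :
  deg e j = (#|[set k | e j k && s k]| + #|[set k | e j k && ~~ s k]|)%N.
Proof.
rewrite /deg -(cardsID [set k | s k] [set u | e j u]).
by congr (_ + _)%N; apply: eq_card => k; rewrite !inE // andbC.
Qed.

Lemma gw_tog (R : realType) (be ga la : R) (s : config V) j : ~~ s j ->
  gibbs_weight e be ga la (tog j s) * ga ^+ #|[set k | e j k && ~~ s k]| =
  gibbs_weight e be ga la s * (la * be ^+ #|[set k | e j k && s k]|).
Proof.
move=> sj.
have h1 := mspin_tog s j; rewrite (negbTE sj) /= in h1.
have h2 := mspin_tog (tog j s) j; rewrite togK tog_j negbK (negbTE sj) in h2.
have E1 : [set k | e j k && (s k == true)] = [set k | e j k && s k].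
  by apply/setP => k; rewrite !inE eqb_id.
have E2 : [set k | e j k && (tog j s k == false)] = [set k | e j k && ~~ s k].
  apply/setP => k; rewrite !inE eqbF_neg; case ejk: (e j k) => //=.
  by rewrite tog_ne //; apply/eqP => kj; move: ejk; rewrite kj eirr.
rewrite E1 in h1; rewrite E2 in h2.
rewrite /gibbs_weight h1 h2 nplus_tog // !exprD exprS.
move: (be ^+ m_spin e s true) (ga ^+ m_spin e (tog j s) false) (la ^+ n_plus s)
  (be ^+ #|[set k | e j k && s k]|) (ga ^+ #|[set k | e j k && ~~ s k]|) => A B C X Y.
ring.
Qed.
End Count.


Section Trans.
Variable R : realType.
Variables (be ga la x : R) (d : nat).
Hypothesis be0 : 0 <= be.
Hypothesis ga0 : 0 < ga.
Hypothesis la0 : 0 < la.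
Hypothesis bg1 : be * ga < 1.
Hypothesis x0 : 0 < x.
Hypothesis hfix : Fd be ga la d x = x.
Hypothesis uq : d%:R * (1 - be * ga) * x / ((be * x + 1) * (x + ga)) <= 1.

Let c := be * ga.
Let u := x / ga.

Lemma u_gt0 : 0 < u. Proof. by rewrite /u divr_gt0. Qed.
Lemma c_ge0 : 0 <= c. Proof. by rewrite /c mulr_ge0 // ltW. Qed.

Lemma la_gg : la / ga ^+ d.+1 = gg c d u.
Proof.
have bx : 0 < be * x + 1 by apply: ltr_wpDl => //; apply: mulr_ge0 => //; exact: ltW.
have xg : 0 < x + ga by apply: addr_gt0.
set a := (be * x + 1) / (x + ga).
have a0 : 0 < a by rewrite /a divr_gt0.
have hla : la = x / a ^+ d.
  by move: hfix; rewrite /Fd -/a => <-; rewrite mulfK // gt_eqF // exprn_gt0.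
have hr : (1 + u) / (1 + c * u) = (ga * a)^-1.
  by rewrite /u /c /a; field; rewrite !gt_eqF.
clearbody a; rewrite /gg hr hla exprVn exprMn exprS.
have g0 : ga ^+ d != 0 by rewrite gt_eqF // exprn_gt0.
have ad0 : a ^+ d != 0 by rewrite gt_eqF // exprn_gt0.
rewrite /u; field; rewrite g0 ad0 gt_eqF //.
Qed.

Lemma uq_u : d%:R * (1 - c) * u <= (1 + c * u) * (1 + u).
Proof.
have bx : 0 < be * x + 1 by apply: ltr_wpDl => //; apply: mulr_ge0 => //; exact: ltW.
have xg : 0 < x + ga by apply: addr_gt0.
move: uq; rewrite ler_pdivrMr ?mulr_gt0 // mul1r => h.
have -> : (1 + c * u) * (1 + u) = (be * x + 1) * (x + ga) / ga.
  by rewrite /c /u; field; rewrite gt_eqF.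
by rewrite /u mulrA ler_pM2r // invr_gt0.
Qed.

Lemma ggsq : c ^+ d.+1 * gg c d u ^+ 2 =
  c * u ^+ 2 * (c * ((1 + u) / (1 + c * u)) ^+ 2) ^+ d.
Proof. exact: ggsq_gen. Qed.

Lemma cr_ge1 : 1 <= c * u ^+ 2 -> 1 <= c * ((1 + u) / (1 + c * u)) ^+ 2.
Proof.
move=> h; have cu0 : 0 < 1 + c * u.
  by apply: ltr_wpDr => //; apply: mulr_ge0; [exact: c_ge0 | exact: ltW u_gt0].
rewrite expr_div_n mulrA ler_pdivlMr ?exprn_gt0 // mul1r.
have c1 : c <= 1 by rewrite /c; exact: ltW.
have : 0 <= (1 - c) * (c * u ^+ 2 - 1) by apply: mulr_ge0; rewrite subr_ge0.
move=> H; rewrite -subr_ge0; apply: le_trans H _; rewrite le_eqVlt; apply/orP; left.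
apply/eqP; ring.
Qed.

Lemma cr_le1 : c * u ^+ 2 <= 1 -> c * ((1 + u) / (1 + c * u)) ^+ 2 <= 1.
Proof.
move=> h; have cu0 : 0 < 1 + c * u.
  by apply: ltr_wpDr => //; apply: mulr_ge0; [exact: c_ge0 | exact: ltW u_gt0].
rewrite expr_div_n mulrA ler_pdivrMr ?exprn_gt0 // mul1r.
have c1 : c <= 1 by rewrite /c; exact: ltW.
have : 0 <= (1 - c) * (1 - c * u ^+ 2) by apply: mulr_ge0; rewrite subr_ge0.
move=> H; rewrite -subr_ge0; apply: le_trans H _; rewrite le_eqVlt; apply/orP; left.
apply/eqP; ring.
Qed.

Lemma sq_la (hb : 0 < be) :
  c ^+ d.+1 * gg c d u ^+ 2 = la ^+ 2 / (ga / be) ^+ d.+1.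
Proof.
rewrite -la_gg /c exprMn expr_div_n expr_div_n.
have g0 : ga ^+ d.+1 != 0 by rewrite gt_eqF // exprn_gt0.
have b0 : be ^+ d.+1 != 0 by rewrite gt_eqF // exprn_gt0.
move: (ga ^+ d.+1) (be ^+ d.+1) g0 b0 => G B g0 b0.
by field; rewrite g0 b0.
Qed.

Lemma powR_sq (hb : 0 < be) :
  (ga / be) `^ (d.+1%:R / 2) ^+ 2 = (ga / be) ^+ d.+1.
Proof.
have p0 : 0 <= ga / be by rewrite ltW // divr_gt0.
rewrite -powR_mulrn ?powR_ge0 // -powRrM -powR_mulrn //; congr (_ `^ _).
by rewrite divfK // pnatr_eq0.
Qed.

Lemma plus_cu2 : (be = 0 \/ la <= (ga / be) `^ (d.+1%:R / 2)) -> c * u ^+ 2 <= 1.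
Proof.
case=> [b0|hP].
  by rewrite /c b0 !mul0r ler01.
case: (eqVneq be 0) => [b0|bn0]; first by rewrite /c b0 !mul0r ler01.
have hb : 0 < be by rewrite lt_neqAle eq_sym bn0.
rewrite leNgt; apply/negP => h; have h0 := h.
have h1 : 1 < c ^+ d.+1 * gg c d u ^+ 2.
  rewrite ggsq; apply: lt_le_trans h _; rewrite -{1}(mulr1 (c * u ^+ 2)).
  apply: ler_wpM2l; first by apply: mulr_ge0; [exact: c_ge0|exact: sqr_ge0].
  by apply: exprn_ege1; apply: cr_ge1; exact: ltW h0.
move: h1; rewrite sq_la // -powR_sq // ltr_pdivlMr ?exprn_gt0 ?powR_gt0 ?divr_gt0 // mul1r.
rewrite ltNge => /negP; apply; apply: lerXn2r => //; rewrite nnegrE ?powR_ge0 //; exact: ltW.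
Qed.

Lemma minus_cu2 (hb : 0 < be) : (ga / be) `^ (d.+1%:R / 2) < la -> 1 <= c * u ^+ 2.
Proof.
move=> hP; rewrite leNgt; apply/negP => h; have h0 := h.
have h1 : c ^+ d.+1 * gg c d u ^+ 2 < 1.
  rewrite ggsq; apply: le_lt_trans h; rewrite -[X in _ <= X](mulr1 (c * u ^+ 2)).
  apply: ler_wpM2l; first by apply: mulr_ge0; [exact: c_ge0|exact: sqr_ge0].
  apply: exprn_ile1; last by apply: cr_le1; exact: ltW h0.
  by apply: mulr_ge0; [exact: c_ge0|exact: sqr_ge0].
move: h1; rewrite sq_la // -powR_sq // ltr_pdivrMr ?exprn_gt0 ?powR_gt0 ?divr_gt0 // mul1r.
rewrite ltNge => /negP; apply; apply: ltW; apply: ltrXn2r => //; rewrite ?nnegrE ?powR_ge0 //; exact: ltW.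
Qed.

Lemma c01 : 0 <= c <= 1.
Proof. by rewrite c_ge0 /c ltW. Qed.

Lemma plus_bound (d2 : (2 <= d)%N) :
  (be = 0 \/ la <= (ga / be) `^ (d.+1%:R / 2)) ->
  la / ga ^+ d.+1 <= 4 * expR 5 /\ d.+1%:R * (1 - be * ga) * (la / ga ^+ d.+1) <= 15 * expR 5.
Proof.
move=> h; rewrite la_gg; have := key c01 u_gt0 d2 (plus_cu2 h) uq_u.
done.
Qed.

Lemma minus_bound (hb : 0 < be) (d2 : (2 <= d)%N) :
  (ga / be) `^ (d.+1%:R / 2) < la ->
  (la * be ^+ d.+1)^-1 <= 4 * expR 5 /\ d.+1%:R * (1 - be * ga) * (la * be ^+ d.+1)^-1 <= 15 * expR 5.
Proof.
move=> h.
have c0 : 0 < c by rewrite /c mulr_gt0.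
have -> : (la * be ^+ d.+1)^-1 = gg c d (c * u)^-1.
  rewrite gg_inv //; last exact: u_gt0.
  rewrite -la_gg /c exprMn.
  have g0 : ga ^+ d.+1 != 0 by rewrite gt_eqF // exprn_gt0.
  by congr (_^-1); move: (ga ^+ d.+1) g0 => G g0; field.
apply: key => //.
- exact: c01.
- by rewrite invr_gt0 mulr_gt0 // u_gt0.
- have := minus_cu2 hb h => h1.
  have u0 := u_gt0.
  have -> : c * ((c * u)^-1) ^+ 2 = (c * u ^+ 2)^-1.
    by rewrite !expr2; field; rewrite !gt_eqF.
  by rewrite invf_le1 // mulr_gt0 // exprn_gt0.
- apply: uq_inv => //; [exact: u_gt0 | exact: uq_u].
Qed.
End Trans.


Section Assembly.
Variable R : realType.
Variables (V : finType) (e : rel V).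

Lemma G_pow (c : R) (t : config V) j : G e c j t = c ^+ #|[set k | e j k && t k]|.
Proof.
rewrite /G -big_mkcondr /= -prodr_const; apply: eq_bigl => k; by rewrite inE.
Qed.

Lemma final_q (c M : R) (D : nat) : 0 <= c <= 1 -> 0 <= M ->
  D%:R * (1 - c) * M <= 12%:R ^+ 5 -> 1 <= expR (12%:R ^+ 5) * qq c M ^+ D.
Proof.
move=> /andP[c0 c1] M0 h.
have d0 : 0 < 1 + c * M by apply: ltr_wpDr => //; exact: mulr_ge0.
have d1 : 0 < 1 + M by apply: ltr_wpDr.
have hq : expR (- ((1 - c) * M)) <= qq c M.
  rewrite expRN /qq -invf_div lef_pV2 ?posrE ?expR_gt0 ?divr_gt0 //.
  have -> : (1 + M) / (1 + c * M) = 1 + (1 - c) * M / (1 + c * M).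
    by field; rewrite gt_eqF.
  apply: le_trans (expR_ge1Dx _) _; rewrite ler_expR ler_pdivrMr //.
  rewrite -{1}(mulr1 ((1 - c) * M)); apply: ler_wpM2l; last by rewrite lerDl mulr_ge0.
  by apply: mulr_ge0; rewrite // subr_ge0.
have hqD : expR (- (D%:R * ((1 - c) * M))) <= qq c M ^+ D.
  rewrite -mulrN expRM_natl; apply: lerXn2r; rewrite ?nnegrE ?expR_ge0 //.
  exact: le_trans (expR_ge0 _) hq.
apply: le_trans (_ : expR (12%:R ^+ 5) * expR (- (D%:R * ((1 - c) * M))) <= _); last first.
  by apply: ler_wpM2l; rewrite ?expR_ge0.
rewrite -expRD -{1}expR0 ler_expR subr_ge0 mulrA //.
Qed.

Hypothesis esymm : symmetric e.
Hypothesis eirr : irreflexive e.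

Lemma pl_tog (lam : V -> R) (t : config V) j : ~~ t j ->
  \prod_(i | tog j t i) lam i = lam j * \prod_(i | t i) lam i.
Proof.
move=> tj; rewrite (bigD1 j) ?tog_j //=; congr (_ * _); apply: eq_bigl => i.
case: (eqVneq i j) => [->|ij]; first by rewrite andbF (negbTE tj).
by rewrite tog_ne // andbT.
Qed.

Definition neg (t : config V) : config V := [ffun x => ~~ t x].
Lemma negE (t : config V) x : neg t x = ~~ t x.
Proof. by rewrite ffunE. Qed.

Lemma gw_plus (be ga la : R) (t : config V) j : 0 < ga -> ~~ t j ->
  gibbs_weight e be ga la (tog j t) =
  la / ga ^+ deg e j * G e (be * ga) j t * gibbs_weight e be ga la t.
Proof.
move=> g0 tj.
have h := gw_tog esymm eirr be ga la tj.
have gb : ga ^+ #|[set k | e j k && ~~ t k]| != 0 by rewrite expf_neq0 // gt_eqF.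
have ga' : ga ^+ #|[set k | e j k && t k]| != 0 by rewrite expf_neq0 // gt_eqF.
apply: (mulIf gb); rewrite h (deg_split e t j) G_pow exprD exprMn.
move: (ga ^+ #|[set k | e j k && ~~ t k]|) gb (ga ^+ #|[set k | e j k && t k]|)
  ga' (be ^+ #|[set k | e j k && t k]|) (gibbs_weight e be ga la t) => Y Y0 X X0 B W.
by field; rewrite X0 Y0.
Qed.

Lemma gw_minus (be ga la : R) (t : config V) j : 0 < be -> 0 < ga -> 0 < la -> ~~ t j ->
  gibbs_weight e be ga la (neg (tog j t)) =
  (la * be ^+ deg e j)^-1 * G e (be * ga) j t * gibbs_weight e be ga la (neg t).
Proof.
move=> b0 g0 l0 tj.
set sg := neg (tog j t).
have sj : ~~ sg j by rewrite /sg negE tog_j negbK.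
have hts : tog j sg = neg t.
  apply/ffunP => x; rewrite /sg; case: (eqVneq x j) => [->|xj].
    by rewrite tog_j !negE tog_j negbK.
  by rewrite tog_ne // !negE tog_ne.
have h := gw_tog esymm eirr be ga la sj; rewrite hts in h.
have E1 : [set k | e j k && sg k] = [set k | e j k && ~~ t k].
  apply/setP => k; rewrite !inE /sg negE; case ejk: (e j k) => //=.
  by rewrite tog_ne //; apply/eqP => kj; move: ejk; rewrite kj eirr.
have E2 : [set k | e j k && ~~ sg k] = [set k | e j k && t k].
  apply/setP => k; rewrite !inE /sg negE negbK; case ejk: (e j k) => //=.
  by rewrite tog_ne //; apply/eqP => kj; move: ejk; rewrite kj eirr.
rewrite E1 E2 in h.
have gN : ga ^+ #|[set k | e j k && t k]| != 0 by rewrite expf_neq0 // gt_eqF.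
have bN : be ^+ #|[set k | e j k && t k]| != 0 by rewrite expf_neq0 // gt_eqF.
have bA : be ^+ #|[set k | e j k && ~~ t k]| != 0 by rewrite expf_neq0 // gt_eqF.
have -> : gibbs_weight e be ga la (neg t) =
   gibbs_weight e be ga la sg * (la * be ^+ #|[set k | e j k && ~~ t k]|) /
   ga ^+ #|[set k | e j k && t k]| by rewrite -h mulfK.
rewrite (deg_split e t j) G_pow exprD exprMn.
move: (ga ^+ #|[set k | e j k && t k]|) gN (be ^+ #|[set k | e j k && t k]|) bN
  (be ^+ #|[set k | e j k && ~~ t k]|) bA (gibbs_weight e be ga la sg) => X X0 Y Y0 Z Z0 W.
by field; rewrite X0 Y0 Z0 gt_eqF.
Qed.

Definition Kp (chi : bool) (be ga la : R) (j : V) : R :=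
  if chi then la / ga ^+ deg e j else (la * be ^+ deg e j)^-1.

Lemma gw_ge0 (be ga la : R) (t : config V) : 0 <= be -> 0 < ga -> 0 < la ->
  0 <= gibbs_weight e be ga la t.
Proof.
move=> b0 g0 l0; rewrite /gibbs_weight.
by apply: mulr_ge0; [apply: mulr_ge0|]; apply: exprn_ge0 => //; exact: ltW.
Qed.

Lemma nu_ge0 (be ga la : R) (chi : bool) (lam : V -> R) (t : config V) :
  0 <= be -> 0 < ga -> 0 < la -> (forall i, 0 <= lam i) ->
  0 <= tilt lam (flip (gibbs e be ga la) chi) t.
Proof.
move=> b0 g0 l0 lam0.
have gi0 : forall s, 0 <= gibbs e be ga la s.
  move=> s; apply: divr_ge0; first exact: gw_ge0.
  by apply: sumr_ge0 => u _; exact: gw_ge0.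
rewrite /tilt; apply: divr_ge0.
  by apply: mulr_ge0; [exact: gi0 | apply: prodr_ge0 => i _; exact: lam0].
by apply: sumr_ge0 => u _; apply: mulr_ge0; [exact: gi0 | apply: prodr_ge0 => i _; exact: lam0].
Qed.

Lemma nu_loc (be ga la : R) (chi : bool) (lam : V -> R) :
  0 <= be -> 0 < ga -> 0 < la -> (chi = false -> 0 < be) ->
  forall j (t : config V), ~~ t j ->
  tilt lam (flip (gibbs e be ga la) chi) (tog j t) =
  lam j * Kp chi be ga la j * G e (be * ga) j t * tilt lam (flip (gibbs e be ga la) chi) t.
Proof.
move=> b0 g0 l0 hchi j t tj.
have hpi : gibbs_weight e be ga la (if chi then tog j t else [ffun x => ~~ tog j t x]) =
   Kp chi be ga la j * G e (be * ga) j t *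
   gibbs_weight e be ga la (if chi then t else [ffun x => ~~ t x]).
  case: chi hchi => hchi; first exact: gw_plus.
  exact: gw_minus (hchi erefl) g0 l0 tj.
have key : forall (W Zg Pl Z Kj Gj lj : R),
    (Kj * Gj * W / Zg * (lj * Pl)) / Z = lj * Kj * Gj * ((W / Zg * Pl) / Z).
  by move=> *; ring.
rewrite /tilt /flip /gibbs hpi pl_tog //; exact: key.
Qed.
End Assembly.

Unset Implicit Arguments. Set Strict Implicit. Set Printing Implicit Defensive.

Theorem lemma7p8 (R : realType) (V : finType) (e : rel V)
  (beta gamma lambda delta : R) (D : nat) :
  simple_graph e ->
  antiferro beta gamma lambda ->
  0 < delta < 1 ->
  (3 <= D)%N ->
  maxdeg e = D ->
  ((gamma <= 1 /\ forall d : nat, (1 <= d)%N -> (d <= D - 1)%N ->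
        d_unique beta gamma lambda d delta)
   \/ (1 < gamma /\ d_unique beta gamma lambda (D - 1) delta /\ regular e D)) ->
  completely_marginally_stable
    (flip (gibbs e beta gamma lambda) (chi_of beta gamma lambda D))
    (expR (12%:R ^+ 5)).
Proof.
move=> [esymm eirr] [b0 [bg [g0 [l0 bg1]]]] /andP[dl0 dl1] HD Hmax Hcase.
case: D HD Hmax Hcase => [|d] // HD Hmax Hcase.
have d2 : (2 <= d)%N := HD.
rewrite subn1 /= in Hcase.
have Hu : d_unique beta gamma lambda d delta.
  case: Hcase => [[_ H]|[_ [H _]]]; last exact: H.
  by apply: H => //; apply: leq_trans d2.
case: Hu => [[x [x0 hfix]] Hall].
have uq : d%:R * (1 - beta * gamma) * x / ((beta * x + 1) * (x + gamma)) <= 1.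
  by apply: le_trans (Hall x x0 hfix) _; lra.
set chi := chi_of beta gamma lambda d.+1.
set M := if chi then lambda / gamma ^+ d.+1 else (lambda * beta ^+ d.+1)^-1.
have hchi0 : chi = false -> 0 < beta.
  rewrite /chi /chi_of; case: (eqVneq beta 0) => // bn _.
  by rewrite lt_neqAle eq_sym bn.
have hM : M <= 4 * expR 5 /\ d.+1%:R * (1 - beta * gamma) * M <= 15 * expR 5.
  rewrite /M /chi /chi_of; case: (eqVneq beta 0) => [bz|bn] /=.
    by apply: (plus_bound b0 g0 l0 bg1 x0 hfix uq d2); left.
  have bp : 0 < beta by rewrite lt_neqAle eq_sym bn.
  case: (lerP lambda ((gamma / beta) `^ (d.+1%:R / 2))) => h.
    by apply: (plus_bound b0 g0 l0 bg1 x0 hfix uq d2); right.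
  exact: (minus_bound b0 g0 bg1 x0 hfix uq bp d2 h).
move=> lam Hlam i S L s SL iL m0.
have lam0 : forall j, 0 <= lam j by move=> j; case/andP: (Hlam j) => /ltW.
have lam1 : forall j, lam j <= 1 by move=> j; case/andP: (Hlam j).
have degD : forall j, (#|[set k | e j k]| <= d.+1)%N.
  move=> j; have h := @leq_bigmax V (fun v => deg e v) j; rewrite -Hmax; exact: h.
have b1 : beta <= 1 by nra.
have M0 : 0 <= M.
  rewrite /M; case: (chi); first by rewrite divr_ge0 ?exprn_ge0 // ltW.
  by rewrite invr_ge0 mulr_ge0 ?exprn_ge0 // ltW.
have Kp_le : forall j, 0 <= Kp e chi beta gamma lambda j <= M.
  move=> j; rewrite /Kp /M; case hc: (chi).
    have hp : 0 <= lambda / gamma ^+ deg e j.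
      by apply: divr_ge0; [exact: ltW | apply: exprn_ge0; exact: ltW].
    rewrite hp /=.
    apply: ler_wpM2l; first exact: ltW.
    rewrite lef_pV2 ?posrE ?exprn_gt0 //.
    case: Hcase => [[g1 _]|[_ [_ hreg]]].
      by apply: (ler_wiXn2l (ltW g0) g1); exact: degD.
    by rewrite /deg in hreg; rewrite hreg.
  have bp := hchi0 hc.
  have hp : 0 <= (lambda * beta ^+ deg e j)^-1.
    by rewrite invr_ge0; apply: mulr_ge0; [exact: ltW | apply: exprn_ge0; exact: ltW].
  rewrite hp /=.
  rewrite lef_pV2 ?posrE ?mulr_gt0 ?exprn_gt0 //.
  apply: ler_wpM2l; first exact: ltW.
  by apply: (ler_wiXn2l (ltW bp) b1); exact: degD.
set K := fun j => lam j * Kp e chi beta gamma lambda j.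
have KM : forall j, 0 <= K j <= M.
  move=> j; case/andP: (Kp_le j) => k0 kM; rewrite /K mulr_ge0 //=.
  by apply: le_trans kM; apply: ler_piMl.
have c01 : 0 <= beta * gamma <= 1.
  by apply/andP; split; [apply: mulr_ge0 => //; exact: ltW | exact: ltW].
have nuge0 := fun t => @nu_ge0 _ _ e _ _ _ chi lam t b0 g0 l0 lam0.
have nuloc := nu_loc esymm eirr lam b0 g0 l0 hchi0.
have [hc hRL hRS] := @abstract_stab _ _ e eirr _ K _ M nuge0 nuloc c01 KM M0 _ degD i S L s SL iL m0.
have h12 : (12%:R ^+ 5 : R) = 248832%:R by rewrite -natrX.
have e5 := @expR5 R.
have ez : 12%:R ^+ 5 <= expR (12%:R ^+ 5 : R).
  by apply: le_trans (expR_ge1Dx _); rewrite lerDr.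
case: hM => hM1 hM2.
split => //.
  by apply: le_trans hRL _; apply: le_trans ez; rewrite h12; lra.
have hq := final_q c01 M0 (_ : d.+1%:R * (1 - beta * gamma) * M <= 12%:R ^+ 5).
have RL0 : 0 <= Rratio (tilt lam (flip (gibbs e beta gamma lambda) chi)) L s i.
  rewrite /Rratio /cond_marg; apply: divr_ge0; apply: divr_ge0;
    by apply: sumr_ge0 => t _; exact: nuge0.
apply: le_trans (_ : expR (12%:R ^+ 5) * (qq (beta * gamma) M ^+ d.+1 *
   Rratio (tilt lam (flip (gibbs e beta gamma lambda) chi)) L s i) <= _).
  rewrite mulrA -{1}(mul1r (Rratio _ _ _ _)); apply: ler_wpM2r => //.
  by apply: hq; rewrite h12; lra.
by apply: ler_wpM2l => //; apply: ltW; apply: expR_gt0.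
Qed.
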